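(* Let $x,y\ge 0$ not both zero, and $z,p>0$ (the approximation is intended for the regime $x,y\ll z,p$). Let $a=(x+y)/2$ and $g=\sqrt{xy}$. Then $$R_J(x,y,z,p)=\frac{3}{2\sqrt z\,p}\left[\ln\frac{8z}{a+g}-2R_C\!\left(1,\frac pz\right)+\frac\theta p\ln\frac{2p}{a+g}\right],$$ where $\frac{g}{1-g/p}<\theta<\frac{a}{1-a/p}\left(1+\frac{p}{2z}\right)$.
   Context: For $x,y,z\ge 0$ with at most one zero and $p>0$: $R_J(x,y,z,p)=\frac32\int_0^\infty[(t+x)(t+y)(t+z)]^{-1/2}(t+p)^{-1}\,dt$. For $x\ge0$, $y>0$: $R_C(x,y)=\frac12\int_0^\infty(t+x)^{-1/2}(t+y)^{-1}\,dt$.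
   Formalization: The identity is asserted only when $a<p$, that is (x+y)/2 < p, and states that some θ in the given open interval satisfies it. The paper assumes this as well. *)

(* Defs.v *)
From Stdlib Require Import Reals.
From Coquelicot Require Import Coquelicot.
Open Scope R_scope.

(* The improper integral is taken with lower limit 0^+ (filter at_right 0),
   so that an integrable singularity at t = 0 (one of x,y,z zero) is allowed. *)
Definition RJ (x y z p : R) : R :=
  3 / 2 * RInt_gen
    (fun t => / sqrt ((t + x) * (t + y) * (t + z)) * / (t + p))
    (at_right 0) (Rbar_locally p_infty).

Definition RC (x y : R) : R :=
  1 / 2 * RInt_gen
    (fun t => / sqrt (t + x) * / (t + y))
    (at_right 0) (Rbar_locally p_infty).

(* Main.v *)
Require Import Defs.
From Stdlib Require Import Reals Lra Psatz.
From Coquelicot Require Import Coquelicot.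
Open Scope R_scope.

Definition IG (f : R -> R) (l : R) :=
  is_RInt_gen f (at_right 0) (Rbar_locally p_infty) l.

Lemma fp_intro (P : R * R -> Prop) d M : 0 < d ->
  (forall u v, 0 < u < d -> M < v -> P (u, v)) ->
  filter_prod (at_right 0) (Rbar_locally p_infty) P.
Proof.
  intros Hd H.
  apply Filter_prod with (fun u => 0 < u < d) (fun v => M < v).
  - exists (mkposreal d Hd). intros u Hu Hu0. split; auto.
    unfold ball in Hu; simpl in Hu; unfold AbsRing_ball, abs, minus, plus, opp in Hu; simpl in Hu.
    apply Rabs_def2 in Hu. lra.
  - exists M. auto.
  - intros u v Hu Hv. apply H; auto.
Qed.

Lemma fp_elim (P : R * R -> Prop) :
  filter_prod (at_right 0) (Rbar_locally p_infty) P ->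
  forall d M, 0 < d -> exists u v, 0 < u < d /\ M < v /\ P (u, v).
Proof.
  intros [Q1 Q2 [e He] [M0 HM] HP] d M Hd.
  exists (Rmin (e/2) (d/2)), (Rmax M M0 + 1).
  assert (0 < e) by apply cond_pos.
  assert (0 < Rmin (e/2) (d/2)) by (apply Rmin_pos; lra).
  assert (Rmin (e/2) (d/2) <= e/2) by apply Rmin_l.
  assert (Rmin (e/2) (d/2) <= d/2) by apply Rmin_r.
  assert (M <= Rmax M M0) by apply Rmax_l.
  assert (M0 <= Rmax M M0) by apply Rmax_r.
  repeat split; try lra.
  apply HP.
  - apply He; [|lra]. unfold ball; simpl; unfold AbsRing_ball, abs, minus, plus, opp; simpl.
    rewrite Rabs_right; lra.
  - apply HM. lra.
Qed.

Lemma IG_antideriv (f G : R -> R) la lb :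
  (forall t, 0 < t -> is_derive G t (f t)) ->
  (forall t, 0 < t -> continuous f t) ->
  filterlim G (at_right 0) (locally la) ->
  filterlim G (Rbar_locally p_infty) (locally lb) ->
  IG f (lb - la).
Proof.
  intros Hd Hc Ha Hb P [eps HP].
  assert (He : 0 < eps / 2) by (destruct eps; simpl; lra).
  specialize (Ha (fun y => Rabs (y - la) < eps/2)).
  specialize (Hb (fun y => Rabs (y - lb) < eps/2)).
  destruct Ha as [d Hd'].
  { exists (mkposreal _ He). intros y Hy. exact Hy. }
  destruct Hb as [M HM].
  { exists (mkposreal _ He). intros y Hy. exact Hy. }
  apply fp_intro with d (Rmax M 0). apply cond_pos.
  intros u v Hu Hv.
  assert (HM0 : M < v /\ 0 < v) by (split; eapply Rle_lt_trans; [apply Rmax_l|exact Hv|apply Rmax_r|exact Hv]).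
  exists (G v - G u). split.
  - simpl. apply (is_RInt_derive G f).
    + intros x Hx. apply Hd. assert (Rmin u v > 0) by (apply Rmin_glb_lt; lra). lra.
    + intros x Hx. apply Hc. assert (Rmin u v > 0) by (apply Rmin_glb_lt; lra). lra.
  - apply HP. unfold ball; simpl; unfold AbsRing_ball, abs, minus, plus, opp; simpl.
    assert (H1 : Rabs (G u - la) < eps/2).
    { apply Hd'. unfold ball; simpl; unfold AbsRing_ball, abs, minus, plus, opp; simpl.
      rewrite Rabs_right; lra. lra. }
    assert (H2 : Rabs (G v - lb) < eps/2) by (apply HM; lra).
    apply Rabs_def2 in H1. apply Rabs_def2 in H2. apply Rabs_def1; lra.
Qed.
Lemma ex_RInt_pos (f : R -> R) u v : 0 < u -> 0 < v ->
  (forall t, 0 < t -> continuous f t) -> ex_RInt f u v.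
Proof.
  intros Hu Hv Hc. apply (@ex_RInt_continuous R_CompleteNormedModule). intros z Hz. apply Hc.
  assert (Rmin u v > 0) by (apply Rmin_glb_lt; lra). lra.
Qed.

Lemma RInt_mono_interval (f : R -> R) u u0 v0 v :
  0 < u -> u <= u0 -> u0 <= v0 -> v0 <= v ->
  (forall t, 0 < t -> continuous f t) -> (forall t, 0 < t -> 0 <= f t) ->
  RInt f u0 v0 <= RInt f u v.
Proof.
  intros H1 H2 H3 H4 Hc Hp.
  assert (E1 := RInt_Chasles f u u0 v0 (ex_RInt_pos f u u0 ltac:(lra) ltac:(lra) Hc)
                 (ex_RInt_pos f u0 v0 ltac:(lra) ltac:(lra) Hc)).
  assert (E2 := RInt_Chasles f u v0 v (ex_RInt_pos f u v0 ltac:(lra) ltac:(lra) Hc)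
                 (ex_RInt_pos f v0 v ltac:(lra) ltac:(lra) Hc)).
  unfold plus in E1, E2; simpl in E1, E2.
  assert (0 <= RInt f u u0).
  { apply RInt_ge_0; auto. apply ex_RInt_pos; auto; lra. intros; apply Hp; lra. }
  assert (0 <= RInt f v0 v).
  { apply RInt_ge_0; auto. apply ex_RInt_pos; auto; lra. intros; apply Hp; lra. }
  lra.
Qed.

Lemma IG_lower (f : R -> R) l u0 v0 :
  (forall t, 0 < t -> continuous f t) -> (forall t, 0 < t -> 0 <= f t) ->
  IG f l -> 0 < u0 <= v0 -> RInt f u0 v0 <= l.
Proof.
  intros Hc Hp HI Huv.
  destruct (Rle_or_lt (RInt f u0 v0) l) as [|Hlt]; auto. exfalso.
  assert (He : 0 < RInt f u0 v0 - l) by lra.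
  specialize (HI (ball l (mkposreal _ He))).
  destruct (fp_elim _ (HI (locally_ball _ _)) u0 v0) as [u [v [Hu [Hv [y [Hy Hb]]]]]]; [lra|].
  simpl in Hy. apply (@is_RInt_unique R_CompleteNormedModule) in Hy.
  assert (RInt f u0 v0 <= RInt f u v) by (apply RInt_mono_interval; auto; lra).
  unfold ball in Hb; simpl in Hb; unfold AbsRing_ball, abs, minus, plus, opp in Hb; simpl in Hb.
  apply Rabs_def2 in Hb. lra.
Qed.

Lemma IG_exists (f : R -> R) M :
  (forall t, 0 < t -> continuous f t) -> (forall t, 0 < t -> 0 <= f t) ->
  (forall u v, 0 < u <= v -> RInt f u v <= M) -> exists l, IG f l.
Proof.
  intros Hc Hp HM.
  set (E := fun y => exists u v, 0 < u <= v /\ y = RInt f u v).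
  destruct (completeness E) as [l [Hub Hlub]].
  { exists M. intros y [u [v [Huv ->]]]. apply HM; auto. }
  { exists (RInt f 1 1). exists 1, 1. split; auto; lra. }
  exists l. intros P [eps HP].
  assert (Heps := cond_pos eps).
  assert (Hex : exists u0 v0, 0 < u0 <= v0 /\ l - eps < RInt f u0 v0).
  { apply Classical_Prop.NNPP. intros Hn.
    assert (l <= l - eps); [|lra].
    apply Hlub. intros y [u [v [Huv ->]]].
    destruct (Rle_or_lt (RInt f u v) (l - eps)) as [|Hl]; auto.
    exfalso; apply Hn; exists u, v; auto. }
  destruct Hex as [u0 [v0 [Huv0 Hlt]]].
  apply fp_intro with u0 v0. lra.
  intros u v Hu Hv. exists (RInt f u v). split.
  - simpl. apply (@RInt_correct R_CompleteNormedModule). apply ex_RInt_pos; auto; lra.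
  - apply HP. unfold ball; simpl; unfold AbsRing_ball, abs, minus, plus, opp; simpl.
    assert (RInt f u0 v0 <= RInt f u v) by (apply RInt_mono_interval; auto; lra).
    assert (RInt f u v <= l) by (apply Hub; exists u, v; split; auto; lra).
    apply Rabs_def1; lra.
Qed.

Lemma IG_major (f : R -> R) C :
  (forall t, 0 < t -> continuous f t) -> (forall t, 0 < t -> 0 <= f t) ->
  (forall t, 0 < t -> f t <= C / (sqrt t * (1 + t))) -> exists l, IG f l.
Proof.
  intros Hc Hp Hm. apply IG_exists with (C * PI); auto.
  intros u v Huv.
  assert (Hd : forall t, 0 < t -> is_derive (fun t => 2 * C * atan (sqrt t)) t (C / (sqrt t * (1 + t)))).
  { intros t Ht. auto_derive. lra. replace (sqrt t * (sqrt t * 1)) with t by (rewrite Rmult_1_r, sqrt_sqrt; lra).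
    assert (0 < sqrt t) by (apply sqrt_lt_R0; lra). field. lra. }
  assert (Hcm : forall t, 0 < t -> continuous (fun t => C / (sqrt t * (1 + t))) t).
  { intros t Ht. apply continuity_pt_filterlim. apply continuity_pt_div.
    apply continuity_pt_const; intros ? ?; auto.
    apply continuity_pt_mult. apply sqrt_continuity_pt; lra.
    apply continuity_pt_plus. apply continuity_pt_const; intros ? ?; auto. apply continuity_pt_id.
    assert (0 < sqrt t) by (apply sqrt_lt_R0; lra). nra. }
  assert (HI := is_RInt_derive (V:=R_CompleteNormedModule) _ _ u v
     (fun x Hx => Hd x ltac:(rewrite Rmin_left in Hx by lra; lra))
     (fun x Hx => Hcm x ltac:(rewrite Rmin_left in Hx by lra; lra))).
  apply (@is_RInt_unique R_CompleteNormedModule) in HI.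
  apply Rle_trans with (RInt (fun t => C / (sqrt t * (1 + t))) u v).
  - apply RInt_le; try lra. apply ex_RInt_pos; auto; lra.
    apply ex_RInt_pos; auto; lra. intros; apply Hm; lra.
  - rewrite HI. unfold minus, plus, opp; simpl.
    assert (0 <= C).
    { assert (0 <= f 1) by (apply Hp; lra). assert (f 1 <= C / (sqrt 1 * (1+1))) by (apply Hm; lra).
      rewrite sqrt_1 in H0. lra. }
    assert (atan (sqrt v) < PI/2) by (apply atan_bound).
    assert (0 <= atan (sqrt u)).
    { rewrite <- atan_0. destruct (Req_dec (sqrt u) 0) as [->|]; [lra|].
      left. apply atan_increasing. assert (0 <= sqrt u) by apply sqrt_pos. lra. }
    nra.
Qed.

Lemma IG_scale (f : R -> R) l lam : 0 < lam -> IG f l ->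
  IG (fun t => lam * f (lam * t)) l.
Proof.
  intros Hl HI P HP.
  destruct (HI P HP) as [Q1 Q2 [e He] [M HM] HQ].
  apply Filter_prod with (fun u => Q1 (lam * u)) (fun v => Q2 (lam * v)).
  - assert (Hp : 0 < e / lam) by (apply Rdiv_lt_0_compat; [apply cond_pos|lra]).
    exists (mkposreal _ Hp). intros y Hy Hy0. apply He.
    + unfold ball in *; simpl in *; unfold AbsRing_ball, abs, minus, plus, opp in *; simpl in *.
      rewrite Ropp_0, Rplus_0_r in *. rewrite Rabs_mult, (Rabs_right lam) by lra.
      apply Rmult_lt_compat_l with (r := lam) in Hy; [|lra].
      field_simplify in Hy; lra.
    + nra.
  - exists (M / lam). intros x Hx. apply HM.
    apply Rmult_lt_compat_l with (r := lam) in Hx; [|lra]. field_simplify in Hx; lra.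
  - intros u v Hu Hv. destruct (HQ _ _ Hu Hv) as [y [Hy Py]].
    exists y. split; auto. simpl in *.
    assert (H2 : is_RInt f (lam * u + 0) (lam * v + 0) y) by (rewrite !Rplus_0_r; exact Hy).
    apply is_RInt_comp_lin in H2.
    eapply is_RInt_ext; [|exact H2]. intros x _. simpl. rewrite Rplus_0_r. reflexivity.
Qed.

Lemma lim_inf_inv (G H : R -> R) :
  (forall t, 0 < t -> G t = H (/ t)) -> continuous H 0 ->
  filterlim G (Rbar_locally p_infty) (locally (H 0)).
Proof.
  intros HG Hc.
  apply filterlim_ext_loc with (fun t => H (/ t)).
  - exists 0. intros t Ht. symmetry. apply HG; lra.
  - eapply filterlim_comp; [|exact Hc].
    assert (Hr := filterlim_Rbar_inv p_infty ltac:(discriminate)).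
    simpl in Hr. exact Hr.
Qed.

Lemma lim_right_cont (G : R -> R) : continuous G 0 ->
  filterlim G (at_right 0) (locally (G 0)).
Proof.
  intros Hc. eapply filterlim_filter_le_1; [|exact Hc].
  intros P [e He]. exists e. intros y Hy _. apply He, Hy.
Qed.

Lemma IG_RInt_gen f l : IG f l -> RInt_gen f (at_right 0) (Rbar_locally p_infty) = l.
Proof. intros H. apply (@is_RInt_gen_unique R_CompleteNormedModule); auto.
  apply Proper_StrongProper; apply at_right_proper_filter.
  apply Proper_StrongProper; apply Rbar_locally_filter. Qed.

Lemma IG_ext (f g : R -> R) l : (forall t, 0 < t -> f t = g t) -> IG f l -> IG g l.
Proof.
  intros He H. eapply is_RInt_gen_ext; [| exact H].
  apply fp_intro with 1 1. lra. intros u v Hu Hv x Hx. simpl in Hx.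
  apply He. assert (Rmin u v > 0) by (apply Rmin_glb_lt; lra). lra.
Qed.

Lemma IG_plus f g lf lg : IG f lf -> IG g lg -> IG (fun t => f t + g t) (lf + lg).
Proof. intros H1 H2. exact (is_RInt_gen_plus f g lf lg H1 H2). Qed.

Lemma IG_minus f g lf lg : IG f lf -> IG g lg -> IG (fun t => f t - g t) (lf - lg).
Proof. intros H1 H2. exact (is_RInt_gen_minus f g lf lg H1 H2). Qed.

Lemma IG_scal f c lf : IG f lf -> IG (fun t => c * f t) (c * lf).
Proof. intros H1. exact (is_RInt_gen_scal f c lf H1). Qed.

Lemma IG_pos (f : R -> R) l :
  (forall t, 0 < t -> continuous f t) -> (forall t, 0 < t -> 0 < f t) ->
  IG f l -> 0 < l.
Proof.
  intros Hc Hp HI.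
  assert (H1 : RInt f 1 2 <= l) by (apply IG_lower; auto; [intros; left; auto | lra]).
  assert (H2 : RInt (fun _ => 0) 1 2 < RInt f 1 2).
  { apply RInt_lt; try lra. intros; apply Hc; lra. intros; apply continuous_const.
    intros; apply Hp; lra. }
  rewrite RInt_const in H2. unfold scal in H2; simpl in H2; unfold mult in H2; simpl in H2. lra.
Qed.

Lemma exd_cont (f : R -> R) x : ex_derive f x -> continuous f x.
Proof. intros H. apply (ex_derive_continuous f x H). Qed.
Ltac side := repeat split; try match goal with |- _ <> _ => let H := fresh in intro H; nra end; try lra; try nra.

Lemma IG_elem c p : 0 < c < p ->
  IG (fun t => c / ((t + c) * (t + p))) (c / (p - c) * ln (p / c)).
Proof.
  intros Hc.
  set (F := fun t => c / (p - c) * (ln (t + c) - ln (t + p))).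
  set (H := fun s => c / (p - c) * (ln (1 + c * s) - ln (1 + p * s))).
  replace (c / (p - c) * ln (p / c)) with (H 0 - F 0).
  2:{ unfold H, F. rewrite !Rmult_0_r, !Rplus_0_r, !Rplus_0_l, ln_1, ln_div by lra. ring. }
  apply (IG_antideriv _ F).
  - intros t Ht. unfold F. auto_derive. lra. field. lra.
  - intros t Ht. apply exd_cont. auto_derive. side.
  - apply lim_right_cont. apply exd_cont. unfold F. auto_derive. side.
  - apply lim_inf_inv.
    + intros t Ht. unfold F, H.
      replace (t + c) with (t * (1 + c * / t)) by (field; lra).
      replace (t + p) with (t * (1 + p * / t)) by (field; lra).
      assert (0 < / t) by (apply Rinv_0_lt_compat; lra).
      rewrite !ln_mult; try lra; try nra. 
    + apply exd_cont. unfold H. auto_derive. side.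
Qed.

Lemma inv_le_div X Y C : 0 < X -> 0 < Y -> Y <= C * X -> / X <= C / Y.
Proof.
  intros HX HY H. apply Rmult_le_reg_r with (X * Y). nra.
  replace (/ X * (X * Y)) with Y by (field; lra).
  replace (C / Y * (X * Y)) with (C * X) by (field; lra). lra.
Qed.

Definition fJ x y z p t := / sqrt ((t + x) * (t + y) * (t + z)) * / (t + p).
Definition fC z p t := / sqrt (t + 1) * / (t + p / z).

Lemma sqrt_pos_lt u : 0 < u -> 0 < sqrt u.
Proof. apply sqrt_lt_R0. Qed.

Lemma J_exists x y z p : 0 <= x -> 0 <= y -> 0 < x + y -> 0 < z -> 0 < p ->
  exists J, IG (fJ x y z p) J.
Proof.
  intros Hx Hy Hxy Hz Hp.
  set (m := sqrt (x + y) * sqrt z * p).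
  assert (Hm : 0 < m) by (unfold m; apply Rmult_lt_0_compat; [apply Rmult_lt_0_compat|]; try apply sqrt_pos_lt; lra).
  apply IG_major with (2 / m + 2).
  - intros t Ht. apply exd_cont. unfold fJ. auto_derive. repeat split.
    + apply Rmult_lt_0_compat; [|lra]; apply Rmult_lt_0_compat; lra.
    + apply Rgt_not_eq, sqrt_pos_lt. apply Rmult_lt_0_compat; [|lra]; apply Rmult_lt_0_compat; lra.
    + lra.
  - intros t Ht. unfold fJ. apply Rmult_le_pos; left; apply Rinv_0_lt_compat; try lra.
    apply sqrt_pos_lt. apply Rmult_lt_0_compat; [|lra]; apply Rmult_lt_0_compat; lra.
  - intros t Ht. unfold fJ.
    assert (HQ : 0 < sqrt ((t + x) * (t + y))) by (apply sqrt_pos_lt; nra).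
    assert (HS : 0 < sqrt (t + z)) by (apply sqrt_pos_lt; lra).
    assert (Hw : 0 < sqrt t) by (apply sqrt_pos_lt; lra).
    assert (Hww : sqrt t * sqrt t = t) by (apply sqrt_sqrt; lra).
    rewrite sqrt_mult by nra.
    rewrite <- Rinv_mult.
    apply inv_le_div; [repeat apply Rmult_lt_0_compat; lra | nra | ].
    destruct (Rle_or_lt t 1) as [H1|H1].
    + assert (HQ2 : sqrt (x + y) * sqrt t <= sqrt ((t + x) * (t + y))).
      { rewrite <- sqrt_mult by lra. apply sqrt_le_1_alt. nra. }
      assert (HS2 : sqrt z <= sqrt (t + z)) by (apply sqrt_le_1_alt; lra).
      assert (sqrt t <= 1) by (generalize (sqrt_le_1_alt t 1 ltac:(lra)); rewrite sqrt_1; auto).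
      assert (m * sqrt t <= sqrt ((t + x) * (t + y)) * sqrt (t + z) * (t + p)).
      { unfold m. assert (0 <= sqrt (x+y)) by apply sqrt_pos. assert (0 <= sqrt z) by apply sqrt_pos.
        apply Rle_trans with (sqrt (x + y) * sqrt t * sqrt z * p). nra.
        apply Rmult_le_compat; [repeat apply Rmult_le_pos; lra | lra | | lra].
        apply Rmult_le_compat; [repeat apply Rmult_le_pos; lra | lra | lra | lra]. }
      assert (2 / m * (m * sqrt t) = 2 * sqrt t) by (field; lra).
      assert (0 <= 2 / m) by (apply Rlt_le, Rdiv_lt_0_compat; lra).
      nra.
    + assert (HQ2 : t <= sqrt ((t + x) * (t + y))).
      { rewrite <- (sqrt_square t) at 1 by lra. apply sqrt_le_1_alt. nra. }
      assert (HS2 : sqrt t <= sqrt (t + z)) by (apply sqrt_le_1_alt; lra).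
      assert (t * sqrt t <= sqrt ((t + x) * (t + y)) * sqrt (t + z) * (t + p)).
      { apply Rle_trans with (t * sqrt t * 1). nra.
        apply Rmult_le_compat; [repeat apply Rmult_le_pos; lra | lra | | lra].
        apply Rmult_le_compat; [lra | lra | lra | lra]. }
      assert (0 <= 2 / m) by (apply Rlt_le, Rdiv_lt_0_compat; lra).
      assert (sqrt t * (1+t) <= 2*(t*sqrt t)) by nra.
      assert (0 <= 2 / m * (sqrt ((t + x) * (t + y)) * sqrt (t + z) * (t + p))).
      { apply Rmult_le_pos; auto. repeat apply Rmult_le_pos; lra. }
      lra.
Qed.

Lemma C_exists z p : 0 < z -> 0 < p -> exists C0, IG (fC z p) C0.
Proof.
  intros Hz Hp. set (q := p / z). assert (Hq : 0 < q) by (unfold q; apply Rdiv_lt_0_compat; lra).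
  apply IG_major with (2 / q + 2).
  - intros t Ht. apply exd_cont. unfold fC. fold q. auto_derive. repeat split; try lra.
    apply Rgt_not_eq, sqrt_pos_lt; lra.
  - intros t Ht. unfold fC. fold q. apply Rmult_le_pos; left; apply Rinv_0_lt_compat; try lra.
    apply sqrt_pos_lt; lra.
  - intros t Ht. unfold fC. fold q.
    assert (HS : 0 < sqrt (t + 1)) by (apply sqrt_pos_lt; lra).
    assert (Hw : 0 < sqrt t) by (apply sqrt_pos_lt; lra).
    rewrite <- Rinv_mult.
    apply inv_le_div; [repeat apply Rmult_lt_0_compat; lra | nra | ].
    destruct (Rle_or_lt t 1) as [H1|H1].
    + assert (sqrt t <= 1) by (generalize (sqrt_le_1_alt t 1 ltac:(lra)); rewrite sqrt_1; auto).
      assert (1 <= sqrt (t + 1)) by (generalize (sqrt_le_1_alt 1 (t+1) ltac:(lra)); rewrite sqrt_1; auto).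
      assert (2 / q * q = 2) by (field; lra).
      assert (0 <= 2 / q) by (apply Rlt_le, Rdiv_lt_0_compat; lra).
      assert (q <= sqrt (t + 1) * (t + q)) by nra.
      nra.
    + assert (HS2 : sqrt t <= sqrt (t + 1)) by (apply sqrt_le_1_alt; lra).
      assert (0 <= 2 / q) by (apply Rlt_le, Rdiv_lt_0_compat; lra).
      assert (sqrt t * t <= sqrt (t + 1) * (t + q)) by (apply Rmult_le_compat; lra).
      assert (sqrt t * (1+t) <= 2*(sqrt t * t)) by nra.
      assert (0 <= 2 / q * (sqrt (t + 1) * (t + q))) by (apply Rmult_le_pos; nra).
      lra.
Qed.

Lemma algB S r t : 0 < S -> 0 <= r -> 0 < t -> S * S = t + r * r ->
  - (2 * (1 * / (2 * S) * / (S + r))) = r / (t * S) - 1 / t.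
Proof.
  intros HS Hr Ht HSr.
  assert (HSr' : 0 < S - r) by nra.
  replace t with ((S - r) * (S + r)) by nra. field. lra.
Qed.

Definition Gfun x y z t := ln (t + (x+y)/2 + sqrt ((t+x)*(t+y))) - 2 * ln (sqrt (t + z) + sqrt z).
Definition Eint x y z t := sqrt z / (t * sqrt (t + z)) + 1 / sqrt ((t + x) * (t + y)) - 1 / t.

Lemma Gfun_derive x y z t : 0 <= x -> 0 <= y -> 0 < z -> 0 < t -> 0 < x + y ->
 is_derive (Gfun x y z) t (Eint x y z t).
Proof.
  intros. unfold Gfun, Eint.
  assert (HQ : 0 < sqrt ((t + x) * (t + y))) by (apply sqrt_pos_lt; nra).
  assert (HS : 0 < sqrt (t + z)) by (apply sqrt_pos_lt; nra).
  assert (Hr : 0 <= sqrt z) by apply sqrt_pos.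
  auto_derive. repeat split; nra.
  rewrite (algB (sqrt (t+z)) (sqrt z) t) by (auto; rewrite !sqrt_sqrt; lra).
  set (Q := sqrt ((t + x) * (t + y))) in *.
  field. repeat split; lra.
Qed.

Lemma Eint_cont x y z t : 0 <= x -> 0 <= y -> 0 < z -> 0 < t -> 0 < x + y ->
  continuous (Eint x y z) t.
Proof.
  intros. apply exd_cont. unfold Eint.
  assert (HQ : 0 < sqrt ((t + x) * (t + y))) by (apply sqrt_pos_lt; nra).
  assert (HS : 0 < sqrt (t + z)) by (apply sqrt_pos_lt; nra).
  auto_derive. repeat split; try nra.
Qed.

Lemma cR_plus (f g : R -> R) x : continuous f x -> continuous g x -> continuous (fun t => f t + g t) x.
Proof. intros H1 H2. exact (continuous_plus f g x H1 H2). Qed.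
Lemma cR_minus (f g : R -> R) x : continuous f x -> continuous g x -> continuous (fun t => f t - g t) x.
Proof. intros H1 H2. exact (continuous_minus f g x H1 H2). Qed.
Lemma cR_mult (f g : R -> R) x : continuous f x -> continuous g x -> continuous (fun t => f t * g t) x.
Proof. intros H1 H2. exact (continuous_mult f g x H1 H2). Qed.
Lemma cR_ln (f : R -> R) x : continuous f x -> 0 < f x -> continuous (fun t => ln (f t)) x.
Proof. intros H1 H2. apply (continuous_comp f ln x H1). apply continuous_ln; auto. Qed.
Lemma cR_sqrt (f : R -> R) x : continuous f x -> continuous (fun t => sqrt (f t)) x.
Proof. intros H1. apply (continuous_sqrt_comp f x H1). Qed.
Lemma cR_id x : continuous (fun t : R => t) x.
Proof. apply continuous_id. Qed.
Lemma cR_const (c : R) x : continuous (fun _ : R => c) x.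
Proof. apply continuous_const. Qed.

Ltac cont := lazymatch goal with
  | |- continuous (fun _ => ?c) _ => apply cR_const
  | |- continuous (fun t => t) _ => apply cR_id
  | |- continuous (fun t => @?f t + @?g t) _ => apply (cR_plus f g); cont
  | |- continuous (fun t => @?f t - @?g t) _ => apply (cR_minus f g); cont
  | |- continuous (fun t => @?f t * @?g t) _ => apply (cR_mult f g); cont
  | |- continuous (fun t => sqrt (@?f t)) _ => apply (cR_sqrt f); cont
  | |- _ => idtac
  end.

Lemma ln_sqrt2 t : 0 < t -> 2 * ln (sqrt t) = ln t.
Proof.
  intros Ht. rewrite <- (sqrt_sqrt t) at 2 by lra.
  assert (0 < sqrt t) by (apply sqrt_pos_lt; lra).
  rewrite ln_mult by lra. ring.
Qed.

Lemma Gfun_lim0 x y z : 0 <= x -> 0 <= y -> 0 < z -> 0 < x + y ->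
  filterlim (Gfun x y z) (at_right 0) (locally (Gfun x y z 0)).
Proof.
  intros. apply lim_right_cont. unfold Gfun.
  apply cR_minus.
  - apply cR_ln. cont. rewrite Rplus_0_l. assert (0 <= sqrt ((0 + x) * (0 + y))) by apply sqrt_pos. lra.
  - apply cR_mult. apply cR_const. apply cR_ln. cont.
    rewrite Rplus_0_l. assert (0 < sqrt z) by (apply sqrt_pos_lt; lra). lra.
Qed.

Lemma Gfun_liminf x y z : 0 <= x -> 0 <= y -> 0 < z -> 0 < x + y ->
  filterlim (Gfun x y z) (Rbar_locally p_infty) (locally (ln 2)).
Proof.
  intros Hx Hy Hz Hxy.
  set (H := fun s => ln (1 + (x+y)/2 * s + sqrt ((1 + x*s)*(1 + y*s))) - 2 * ln (sqrt (1 + z*s) + sqrt (z*s))).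
  replace (ln 2) with (H 0).
  2:{ unfold H. rewrite !Rmult_0_r, !Rplus_0_r, Rmult_1_r, sqrt_1, sqrt_0, Rplus_0_r, ln_1.
      replace (1+1) with 2 by ring. ring. }
  apply lim_inf_inv.
  - intros t Ht. unfold Gfun, H.
    assert (0 < / t) by (apply Rinv_0_lt_compat; lra).
    assert (0 <= x * / t) by (apply Rmult_le_pos; lra).
    assert (0 <= y * / t) by (apply Rmult_le_pos; lra).
    assert (0 < z * / t) by (apply Rmult_lt_0_compat; lra).
    assert (E1 : sqrt ((t + x) * (t + y)) = t * sqrt ((1 + x * / t) * (1 + y * / t))).
    { replace ((t + x) * (t + y)) with ((t * t) * ((1 + x * / t) * (1 + y * / t))) by (field; lra).
      rewrite sqrt_mult by nra. rewrite sqrt_square by lra. reflexivity. }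
    assert (E2 : sqrt (t + z) = sqrt t * sqrt (1 + z * / t)).
    { rewrite <- sqrt_mult by nra. f_equal. field. lra. }
    assert (E3 : sqrt z = sqrt t * sqrt (z * / t)).
    { rewrite <- sqrt_mult by nra. f_equal. field. lra. }
    rewrite E1, E2, E3.
    assert (0 <= sqrt ((1 + x * / t) * (1 + y * / t))) by apply sqrt_pos.
    assert (0 < sqrt (1 + z * / t)) by (apply sqrt_pos_lt; nra).
    assert (0 <= sqrt (z * / t)) by apply sqrt_pos.
    assert (0 < sqrt t) by (apply sqrt_pos_lt; lra).
    replace (t + (x + y) / 2 + t * sqrt ((1 + x * / t) * (1 + y * / t))) with
      (t * (1 + (x + y) / 2 * / t + sqrt ((1 + x * / t) * (1 + y * / t)))) by (field; lra).
    replace (sqrt t * sqrt (1 + z * / t) + sqrt t * sqrt (z * / t)) with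
      (sqrt t * (sqrt (1 + z * / t) + sqrt (z * / t))) by ring.
    rewrite ln_mult by nra. rewrite ln_mult by nra.
    pose proof (ln_sqrt2 t Ht). lra.
  - unfold H. apply cR_minus.
    + apply cR_ln. cont. rewrite !Rmult_0_r, !Rplus_0_r, Rmult_1_r, sqrt_1. lra.
    + apply cR_mult. apply cR_const. apply cR_ln. cont.
      rewrite !Rmult_0_r, !Rplus_0_r, sqrt_1, sqrt_0. lra.
Qed.

Definition kf z p t := sqrt z * p / (sqrt (t + z) * (t + p)).
Definition Dint x y z p t := (1 - kf z p t) * (1 / t - 1 / sqrt ((t + x) * (t + y))).

Lemma k_bounds z p t : 0 < z -> 0 < p -> 0 < t ->
  p / (t + p) * (2 * z / (2 * z + t)) <= kf z p t /\ kf z p t < p / (t + p).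
Proof.
  intros Hz Hp Ht. unfold kf.
  set (r := sqrt z). set (S := sqrt (t + z)).
  assert (Hr : 0 < r) by (apply sqrt_pos_lt; lra).
  assert (Hrr : r * r = z) by (apply sqrt_sqrt; lra).
  assert (HS : 0 < S) by (apply sqrt_pos_lt; lra).
  assert (HSS : S * S = t + z) by (apply sqrt_sqrt; lra).
  assert (HrS : r < S) by nra.
  split.
  - replace (r * p / (S * (t + p))) with (p / (t + p) * (r / S)) by (field; lra).
    apply Rmult_le_compat_l. apply Rlt_le, Rdiv_lt_0_compat; lra.
    apply Rmult_le_reg_r with (S * (2 * z + t)). nra.
    replace (2 * z / (2 * z + t) * (S * (2 * z + t))) with (2 * z * S) by (field; lra).
    replace (r / S * (S * (2 * z + t))) with (r * (2 * z + t)) by (field; lra).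
    rewrite <- Hrr. replace t with (S * S - r * r) by lra.
    assert (0 <= r * ((S - r) * (S - r))) by (apply Rmult_le_pos; nra). nra.
  - replace (r * p / (S * (t + p))) with (p / (t + p) * (r / S)) by (field; lra).
    rewrite <- (Rmult_1_r (p / (t + p))) at 2.
    apply Rmult_lt_compat_l. apply Rdiv_lt_0_compat; lra.
    apply Rmult_lt_reg_r with S. lra. replace (r / S * S) with r by (field; lra). lra.
Qed.

Lemma Q_bounds x y t : 0 <= x -> 0 <= y -> 0 < x + y -> 0 < t ->
  t + sqrt (x * y) <= sqrt ((t + x) * (t + y)) /\
  sqrt ((t + x) * (t + y)) <= t + (x + y) / 2 /\
  t < sqrt ((t + x) * (t + y)).
Proof.
  intros Hx Hy Hxy Ht.
  assert (Hg : sqrt (x * y) * sqrt (x * y) = x * y) by (apply sqrt_sqrt; nra).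
  assert (Hg0 : 0 <= sqrt (x * y)) by apply sqrt_pos.
  assert (Hga : sqrt (x * y) <= (x + y) / 2).
  { assert (Hxy2 : 0 <= (x - y) * (x - y)) by apply Rle_0_sqr.
    assert (Hm : sqrt (x * y) * sqrt (x * y) <= (x + y) / 2 * ((x + y) / 2)) by (rewrite Hg; nra).
    destruct (Rle_or_lt (sqrt (x * y)) ((x + y) / 2)) as [|Hl]; auto. nra. }
  split; [|split].
  - rewrite <- (sqrt_square (t + sqrt (x * y))) by lra. apply sqrt_le_1_alt. nra.
  - rewrite <- (sqrt_square (t + (x + y) / 2)) by lra. apply sqrt_le_1_alt. nra.
  - rewrite <- (sqrt_square t) at 1 by lra. apply sqrt_lt_1_alt. nra.
Qed.

Lemma D_lower x y z p t : 0 <= x -> 0 <= y -> 0 < x + y -> 0 < z -> 0 < p -> 0 < t ->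
  sqrt (x * y) / ((t + sqrt (x * y)) * (t + p)) < Dint x y z p t.
Proof.
  intros Hx Hy Hxy Hz Hp Ht.
  destruct (k_bounds z p t Hz Hp Ht) as [_ Hk].
  destruct (Q_bounds x y t Hx Hy Hxy Ht) as [HQ1 [HQ2 HQ3]].
  unfold Dint. set (k := kf z p t) in *. set (Q := sqrt ((t + x) * (t + y))) in *.
  set (g := sqrt (x * y)) in *.
  assert (Hg0 : 0 <= g) by apply sqrt_pos.
  assert (HA : 1 / t - 1 / Q = (Q - t) / (t * Q)) by (field; lra).
  rewrite HA.
  assert (HA0 : 0 < (Q - t) / (t * Q)) by (apply Rdiv_lt_0_compat; nra).
  assert (HA1 : g / (t * (t + g)) <= (Q - t) / (t * Q)).
  { apply Rmult_le_reg_r with (t * (t + g) * Q). apply Rmult_lt_0_compat; nra.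
    replace (g / (t * (t + g)) * (t * (t + g) * Q)) with (g * Q) by (field; lra).
    replace ((Q - t) / (t * Q) * (t * (t + g) * Q)) with ((Q - t) * (t + g)) by (field; lra).
    nra. }
  assert (H1k : t / (t + p) < 1 - k).
  { replace (t / (t + p)) with (1 - p / (t + p)) by (field; lra). lra. }
  replace (g / ((t + g) * (t + p))) with (t / (t + p) * (g / (t * (t + g)))) by (field; lra).
  assert (0 <= t / (t + p)) by (apply Rlt_le, Rdiv_lt_0_compat; lra).
  apply Rle_lt_trans with (t / (t + p) * ((Q - t) / (t * Q))).
  - apply Rmult_le_compat_l; auto.
  - apply Rmult_lt_compat_r; auto.
Qed.

Lemma D_upper x y z p t : 0 <= x -> 0 <= y -> 0 < x + y -> 0 < z -> 0 < p -> 0 < t ->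
  Dint x y z p t < (1 + p / (2 * z)) * ((x + y) / 2 / ((t + (x + y) / 2) * (t + p))).
Proof.
  intros Hx Hy Hxy Hz Hp Ht.
  destruct (k_bounds z p t Hz Hp Ht) as [Hk1 Hk].
  destruct (Q_bounds x y t Hx Hy Hxy Ht) as [HQ1 [HQ2 HQ3]].
  unfold Dint. set (k := kf z p t) in *. set (Q := sqrt ((t + x) * (t + y))) in *.
  set (a := (x + y) / 2) in *.
  assert (Ha : 0 < a) by (unfold a; lra).
  assert (HA : 1 / t - 1 / Q = (Q - t) / (t * Q)) by (field; lra).
  rewrite HA.
  assert (HA0 : 0 < (Q - t) / (t * Q)) by (apply Rdiv_lt_0_compat; nra).
  assert (HA1 : (Q - t) / (t * Q) <= a / (t * (t + a))).
  { apply Rmult_le_reg_r with (t * (t + a) * Q). apply Rmult_lt_0_compat; nra.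
    replace (a / (t * (t + a)) * (t * (t + a) * Q)) with (a * Q) by (field; lra).
    replace ((Q - t) / (t * Q) * (t * (t + a) * Q)) with ((Q - t) * (t + a)) by (field; lra).
    nra. }
  assert (Hkp : p / (t + p) < 1) by (apply Rmult_lt_reg_r with (t + p); [lra|]; field_simplify; lra).
  assert (H1k : 1 - k < (1 + p / (2 * z)) * (t / (t + p))).
  { apply Rle_lt_trans with (1 - p / (t + p) * (2 * z / (2 * z + t))). lra.
    apply Rmult_lt_reg_r with ((t + p) * (2 * z + t) * (2 * z)). apply Rmult_lt_0_compat; nra.
    replace ((1 - p / (t + p) * (2 * z / (2 * z + t))) * ((t + p) * (2 * z + t) * (2 * z)))
      with (((t + p) * (2 * z + t) - 2 * p * z) * (2 * z)) by (field; lra).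
    replace ((1 + p / (2 * z)) * (t / (t + p)) * ((t + p) * (2 * z + t) * (2 * z)))
      with ((2 * z + p) * t * (2 * z + t)) by (field; lra).
    assert (0 < p * (t * t)) by (apply Rmult_lt_0_compat; nra). nra. }
  replace ((1 + p / (2 * z)) * (a / ((t + a) * (t + p))))
    with ((1 + p / (2 * z)) * (t / (t + p)) * (a / (t * (t + a)))) by (field; lra).
  apply Rle_lt_trans with ((1 - k) * (a / (t * (t + a)))).
  - apply Rmult_le_compat_l; lra.
  - apply Rmult_lt_compat_r; [apply Rdiv_lt_0_compat; nra | lra].
Qed.

Lemma ident x y z p t : 0 <= x -> 0 <= y -> 0 < x + y -> 0 < z -> 0 < p -> 0 < t ->
  sqrt z * p * fJ x y z p t + / z * fC z p (/ z * t) - Eint x y z t = Dint x y z p t.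
Proof.
  intros Hx Hy Hxy Hz Hp Ht. unfold fJ, fC, Eint, Dint, kf.
  assert (HQ : 0 < sqrt ((t + x) * (t + y))) by (apply sqrt_pos_lt; nra).
  assert (HS : 0 < sqrt (t + z)) by (apply sqrt_pos_lt; nra).
  assert (Hr : 0 < sqrt z) by (apply sqrt_pos_lt; nra).
  rewrite sqrt_mult by nra.
  assert (E : sqrt (/ z * t + 1) = sqrt (t + z) / sqrt z).
  { assert (Hz' : 0 < / z) by (apply Rinv_0_lt_compat; lra).
    assert (E1 : sqrt (t + z) = sqrt (/ z * t + 1) * sqrt z).
    { rewrite <- sqrt_mult by nra. f_equal. field. lra. }
    rewrite E1. field. lra. }
  rewrite E. field. repeat split; try lra.
Qed.

Lemma Dint_cont x y z p t : 0 <= x -> 0 <= y -> 0 < x + y -> 0 < z -> 0 < p -> 0 < t ->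
  continuous (Dint x y z p) t.
Proof.
  intros Hx Hy Hxy Hz Hp Ht. apply exd_cont. unfold Dint, kf.
  assert (HQ : 0 < sqrt ((t + x) * (t + y))) by (apply sqrt_pos_lt; nra).
  assert (HS : 0 < sqrt (t + z)) by (apply sqrt_pos_lt; nra).
  auto_derive. repeat split; try nra.
Qed.

Lemma elem_cont c p t : 0 <= c -> 0 < p -> 0 < t -> continuous (fun t => c / ((t + c) * (t + p))) t.
Proof. intros. apply exd_cont. auto_derive. nra. Qed.

Theorem mainTheorem12 (x y z p : R) :
  0 <= x -> 0 <= y -> ~ (x = 0 /\ y = 0) -> 0 < z -> 0 < p ->
  (x + y) / 2 < p ->
  let a := (x + y) / 2 in
  let g := sqrt (x * y) in
  exists theta : R,
    g / (1 - g / p) < theta /\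
    theta < a / (1 - a / p) * (1 + p / (2 * z)) /\
    RJ x y z p =
      3 / (2 * sqrt z * p) *
      (ln (8 * z / (a + g)) - 2 * RC 1 (p / z)
       + theta / p * ln (2 * p / (a + g))).
Proof.
  intros Hx Hy Hnz Hz Hp Hap a g.
  assert (Hxy : 0 < x + y).
  { destruct (Rle_or_lt (x + y) 0) as [H|H]; auto. exfalso. apply Hnz. split; lra. }
  assert (Ha : 0 < a) by (unfold a; lra).
  assert (Hap' : a < p) by exact Hap.
  destruct (Q_bounds x y 1 Hx Hy Hxy ltac:(lra)) as [Hga1 _].
  assert (Hg0 : 0 <= g) by apply sqrt_pos.
  assert (Hga : g <= a).
  { assert (Hg2 : g * g = x * y) by (apply sqrt_sqrt; nra).
    assert (Hxy2 : 0 <= (x - y) * (x - y)) by apply Rle_0_sqr.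
    destruct (Rle_or_lt g a) as [|Hl]; auto. unfold a in *. nra. }
  destruct (J_exists x y z p Hx Hy Hxy Hz Hp) as [J HJ].
  destruct (C_exists z p Hz Hp) as [C0 HC].
  assert (HCs := IG_scale (fC z p) C0 (/ z) ltac:(apply Rinv_0_lt_compat; lra) HC).
  assert (HE : IG (Eint x y z) (ln 2 - Gfun x y z 0)).
  { apply (IG_antideriv _ (Gfun x y z)).
    - intros t Ht. apply Gfun_derive; auto.
    - intros t Ht. apply Eint_cont; auto.
    - apply Gfun_lim0; auto.
    - apply Gfun_liminf; auto. }
  set (Lam := ln 2 - Gfun x y z 0) in HE.
  assert (HLam : Lam = ln (8 * z / (a + g))).
  { unfold Lam, Gfun. rewrite !Rplus_0_l. fold a g.
    assert (Hr : 0 < sqrt z) by (apply sqrt_pos_lt; lra).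
    replace (sqrt z + sqrt z) with (2 * sqrt z) by ring.
    rewrite ln_div by nra. rewrite !ln_mult by nra.
    rewrite <- (ln_sqrt2 z Hz).
    replace 8 with (2 * (2 * 2)) by ring. rewrite !ln_mult by lra. ring. }
  set (D := sqrt z * p * J + C0 - Lam).
  assert (HD : IG (Dint x y z p) D).
  { apply IG_ext with (fun t => sqrt z * p * fJ x y z p t + / z * fC z p (/ z * t) - Eint x y z t).
    - intros t Ht. apply ident; auto.
    - apply IG_minus; auto. apply IG_plus; auto. apply IG_scal; auto. }
  assert (HRJ : RJ x y z p = 3 / 2 * J).
  { unfold RJ. f_equal. apply IG_RInt_gen. exact HJ. }
  assert (HRC : RC 1 (p / z) = 1 / 2 * C0).
  { unfold RC. f_equal. apply IG_RInt_gen. exact HC. }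
  set (L := ln (2 * p / (a + g))).
  assert (HL : 0 < L).
  { unfold L. rewrite <- ln_1. apply ln_increasing. lra.
    apply Rmult_lt_reg_r with (a + g). lra.
    replace (2 * p / (a + g) * (a + g)) with (2 * p) by (field; lra). lra. }
  assert (HLg : g / (p - g) * L < D).
  { destruct (Req_dec g 0) as [Hg|Hg].
    - rewrite Hg. unfold Rdiv. rewrite Rmult_0_l, Rmult_0_l.
      apply (IG_pos (Dint x y z p)); auto.
      + intros t Ht. apply Dint_cont; auto.
      + intros t Ht. generalize (D_lower x y z p t Hx Hy Hxy Hz Hp Ht). fold g. rewrite Hg.
        unfold Rdiv. rewrite Rmult_0_l. auto.
    - assert (Hgp : 0 < g) by lra.
      assert (Hel := IG_elem g p ltac:(lra)).
      assert (Hpos := IG_pos _ _ (fun t Ht => cR_minus _ _ t (Dint_cont x y z p t Hx Hy Hxy Hz Hp Ht)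
                                          (elem_cont g p t Hg0 Hp Ht))
                       (fun t Ht => ltac:(generalize (D_lower x y z p t Hx Hy Hxy Hz Hp Ht); fold g; lra))
                       (IG_minus _ _ _ _ HD Hel)).
      simpl in Hpos.
      assert (ln (2 * p / (a + g)) <= ln (p / g)).
      { apply Rlt_le in HL. destruct (Req_dec (2 * p / (a + g)) (p / g)) as [E|E].
        - rewrite E; lra.
        - left. apply ln_increasing. apply Rdiv_lt_0_compat; lra.
          assert (2 * p / (a + g) <= p / g); [|lra].
          apply Rmult_le_reg_r with ((a + g) * g). nra.
          replace (2 * p / (a + g) * ((a + g) * g)) with (2 * p * g) by (field; lra).
          replace (p / g * ((a + g) * g)) with (p * (a + g)) by (field; lra). nra. }
      fold L in H.
      assert (0 <= g / (p - g)) by (apply Rlt_le, Rdiv_lt_0_compat; lra).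
      nra. }
  assert (HLa : D < (1 + p / (2 * z)) * (a / (p - a)) * L).
  { assert (Hel := IG_scal _ (1 + p / (2 * z)) _ (IG_elem a p ltac:(lra))).
    assert (Hpos := IG_pos _ _ (fun t Ht => cR_minus _ _ t (cR_mult _ _ t (cR_const (1 + p / (2 * z)) t) (elem_cont a p t ltac:(lra) Hp Ht))
                                          (Dint_cont x y z p t Hx Hy Hxy Hz Hp Ht))
                       (fun t Ht => ltac:(generalize (D_upper x y z p t Hx Hy Hxy Hz Hp Ht); fold a; lra))
                       (IG_minus _ _ _ _ Hel HD)).
    simpl in Hpos.
    assert (ln (p / a) <= L).
    { unfold L. destruct (Req_dec (2 * p / (a + g)) (p / a)) as [E|E].
      - rewrite E; lra.
      - left. apply ln_increasing. apply Rdiv_lt_0_compat; lra.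
        assert (p / a <= 2 * p / (a + g)); [|lra].
        apply Rmult_le_reg_r with ((a + g) * a). nra.
        replace (2 * p / (a + g) * ((a + g) * a)) with (2 * p * a) by (field; lra).
        replace (p / a * ((a + g) * a)) with (p * (a + g)) by (field; lra). nra. }
    assert (0 <= (1 + p / (2 * z)) * (a / (p - a))).
    { apply Rmult_le_pos. assert (0 <= p / (2 * z)) by (apply Rlt_le, Rdiv_lt_0_compat; lra). lra.
      apply Rlt_le, Rdiv_lt_0_compat; lra. }
    nra. }
  exists (p * D / L). split; [|split].
  - replace (g / (1 - g / p)) with (p * (g / (p - g))) by (field; lra).
    apply Rmult_lt_reg_r with L; auto.
    replace (p * D / L * L) with (p * D) by (field; lra). nra.
  - replace (a / (1 - a / p) * (1 + p / (2 * z))) with (p * ((1 + p / (2 * z)) * (a / (p - a)))) by (field; lra).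
    apply Rmult_lt_reg_r with L; auto.
    replace (p * D / L * L) with (p * D) by (field; lra). nra.
  - rewrite HRJ, HRC, <- HLam. fold L. unfold D.
    assert (Hr : 0 < sqrt z) by (apply sqrt_pos_lt; lra).
    field. repeat split; lra.
Qed.
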